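(* Let $K_n$, $L_n$, $C_n$, $K_{1,n-1}$ denote the complete graph, path, cycle and star on $n$ vertices ($L_0$ and $K_0$ are the empty graph, $K_{1,0}=K_1$); their graph-associahedra are the permutohedron $Pe^{n-1}$, associahedron $As^{n-1}$, cyclohedron $Cy^{n-1}$ and stellohedron $St^{n-1}$, with $F(Pe^{n-1})=F_{K_n}$, $F(As^{n-1})=F_{L_n}$, $F(Cy^{n-1})=F_{C_n}$, $F(St^{n-1})=F_{K_{1,n-1}}$. Then $$F_{K_n}=n\,(F_{K_{n-1}})_1\ (n\ge1),\qquad F_{L_n}=\Big(\sum_{k=1}^nF_{L_{k-1}}F_{L_{n-k}}\Big)_1\ (n\ge1),$$ $$F_{C_n}=n\,(F_{L_{n-1}})_1\ (n\ge3),\qquad F_{K_{1,n-1}}=\big((n-1)F_{K_{1,n-2}}+M_{(1)}^{\,n-1}\big)_1\ (n\ge2).$$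
   Context: For a coloring $\lambda:V\to\mathbb{N}=\{1,2,\dots\}$ of a finite simple graph $\Gamma$ with values $i_1<\dots<i_k$, let $I_j=\lambda^{-1}(\{i_1,\dots,i_j\})$, $I_0=\emptyset$. It is ordered if for each $j$, no two distinct vertices $u,w$ with $\lambda(u)=\lambda(w)=i_j$ are joined by a path in $\Gamma$ (possibly a single edge) all of whose internal vertices lie in $I_{j-1}$. $F_\Gamma=\sum_{\lambda\text{ ordered}}\prod_{v\in V}x_{\lambda(v)}$, with $F_\Gamma=1$ for the graph with no vertices. For a composition $\alpha=(a_1,\dots,a_k)$, $M_\alpha=\sum_{i_1<\dots<i_k}x_{i_1}^{a_1}\cdots x_{i_k}^{a_k}$, $M_{()}=1$; $M_{(1)}=\sum_i x_i$. The shifting operator $G\mapsto(G)_1$ is the linear map on quasisymmetric functions with $(M_{(a_1,\dots,a_k)})_1=M_{(a_1,\dots,a_k,1)}$. *)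

(* Defs.v *)
(* Quasisymmetric functions are represented as formal power
   series in the variables x_1, x_2, ... : a series is its coefficient function
   on monomials; a monomial is an exponent vector [:: a_1; ...; a_N] : seq nat
   meaning x_1^a_1 ... x_N^a_N (trailing zeros are immaterial). *)
From HB Require Import structures.
From mathcomp Require Import all_boot.
From Stdlib Require Import ClassicalEpsilon.
Set Implicit Arguments. Unset Strict Implicit. Unset Printing Implicit Defensive.

Definition pdec (P : Prop) : bool :=
  if excluded_middle_informative P then true else false.

Definition qs := seq nat -> nat.

Fixpoint splits (s : seq nat) : seq (seq nat * seq nat) :=
  match s with
  | [::] => [:: ([::], [::])]
  | a :: s' => [seq (i :: p.1, (a - i) :: p.2) | i <- iota 0 a.+1, p <- splits s']
  end.

Definition qone : qs := fun s => all (fun a => a == 0) s.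
Definition qadd (F G : qs) : qs := fun s => F s + G s.
Definition qscale (n : nat) (F : qs) : qs := fun s => n * F s.
Definition qmul (F G : qs) : qs := fun s => \sum_(p <- splits s) F p.1 * G p.2.
Definition qpow (F : qs) (n : nat) : qs := iter n (qmul F) qone.

Definition M1 : qs := fun s => sumn s == 1.

(* The shifting operator (M_(a_1..a_k))_1 = M_(a_1..a_k,1), extended linearly:
   the coefficient of a monomial whose sequence of nonzero exponents is
   (a_1,...,a_k) in (G)_1 is, if a_k = 1, the coefficient in G of
   x_1^a_1 ... x_(k-1)^a_(k-1) (= coefficient of M_(a_1..a_(k-1)) when G is
   quasisymmetric), and 0 otherwise. *)
Definition qshift (G : qs) : qs := fun s =>
  let c := [seq a <- s | a != 0] in
  if last 0 c == 1 then G (take (size c).-1 c) else 0.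

Definition ordered (V : finType) (e : rel V) (lam : V -> nat) : Prop :=
  forall u w : V, u != w -> lam u = lam w ->
    ~ (exists p : seq V, path e u (rcons p w) /\ all (fun x => lam x < lam u) p).

(* F_Gamma: coefficient of x_1^s_1 ... x_N^s_N is the number of ordered
   colorings lam : V -> {1..N} (color i+1 encoded by the ordinal i) with
   exactly s_i vertices of color i. *)
Definition FG (V : finType) (e : rel V) : qs := fun s =>
  #|[pred l : {ffun V -> 'I_(size s)} |
      pdec (ordered e (fun v => nat_of_ord (l v)))
      && [forall i : 'I_(size s), #|[pred v | l v == i]| == nth 0 s i]]|.

Definition Kg (n : nat) : rel 'I_n := fun i j => i != j.
Definition Lg (n : nat) : rel 'I_n := fun i j => (i.+1 == j :> nat) || (j.+1 == i :> nat).
Definition Cg (n : nat) : rel 'I_n :=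
  fun i j => (i != j) && ((i.+1 %% n == j :> nat) || (j.+1 %% n == i :> nat)).
Definition Sg (n : nat) : rel 'I_n :=
  fun i j => (i != j) && ((i == 0 :> nat) || (j == 0 :> nat)).
Arguments Kg n : clear implicits.
Arguments Lg n : clear implicits.
Arguments Cg n : clear implicits.
Arguments Sg n : clear implicits.

(* Main.v *)
Require Import Defs.
From mathcomp Require Import all_boot zify.
From Stdlib Require Import ClassicalEpsilon.
Set Implicit Arguments. Unset Strict Implicit. Unset Printing Implicit Defensive.

Lemma pdecP (P : Prop) : pdec P = true <-> P.
Proof. rewrite /pdec; case: excluded_middle_informative => //. Qed.

Lemma pdec_iff (P Q : Prop) : (P <-> Q) -> pdec P = pdec Q.
Proof.
move=> h; rewrite /pdec; case: excluded_middle_informative => a;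
  case: excluded_middle_informative => b //; exfalso; tauto.
Qed.

Lemma card_inj (A B : finType) (f : A -> B) (P : pred A) (Q : pred B) :
  injective f -> (forall a, P a = Q (f a)) ->
  (forall b, Q b -> exists a, b = f a) -> #|P| = #|Q|.
Proof.
move=> fi hPQ hs; rewrite -(card_image fi P); apply: eq_card => b.
apply/imageP/idP => [[a Pa ->]|Qb]; first by move: Pa; rewrite !unfold_in hPQ.
by case: (hs b Qb) => a ba; exists a => //; rewrite unfold_in hPQ -ba.
Qed.

Lemma card_sum1 (A : finType) (P : pred A) : #|P| = \sum_a (P a : nat).
Proof. by rewrite -sum1_card big_mkcond; apply: eq_bigr => a _; rewrite unfold_in; case: (P a). Qed.

Lemma lift_seq (A B : eqType) (f : A -> B) (p : seq B) :
  (forall x, x \in p -> exists y, x = f y) -> exists q, p = map f q.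
Proof.
elim: p => [|x p IH] h; first by exists [::].
case: (h x (mem_head _ _)) => y ->.
case: IH => [z zp|q ->]; first by apply: h; rewrite inE zp orbT.
by exists (y :: q).
Qed.

Lemma ordered_ext (V : finType) (e : rel V) lam1 lam2 :
  lam1 =1 lam2 -> ordered e lam1 -> ordered e lam2.
Proof.
move=> h o u w uw luw [p [pp pa]]; apply: (o u w uw); first by rewrite !h.
by exists p; split=> //; apply: sub_all pa => x /=; rewrite !h.
Qed.

Lemma ordered_sub (V1 V2 : finType) (f : V1 -> V2) (e1 : rel V1) (e2 : rel V2) lam :
  injective f -> (forall x y, e1 x y = e2 (f x) (f y)) ->
  ordered e2 lam -> ordered e1 (fun x => lam (f x)).
Proof.
move=> fi he o u w uw luw [p [pp pa]].
apply: (o (f u) (f w) _ luw); first by rewrite (inj_eq fi).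
exists (map f p); split; last by rewrite all_map.
rewrite -map_rcons path_map; move: pp; by rewrite (eq_path (e' := e1)) // => x y; rewrite /relpre he. Qed.


Lemma ordered_lift (V1 V2 : finType) (f : V1 -> V2) (e1 : rel V1) (e2 : rel V2) lam :
  (forall x y, e1 x y = e2 (f x) (f y)) -> ordered e1 (fun x => lam (f x)) ->
  forall u w p, u != w -> lam u = lam w -> path e2 u (rcons p w) ->
  all (fun x => lam x < lam u) p ->
  (forall x, x \in u :: rcons p w -> exists y, x = f y) -> False.
Proof.
move=> he o u w p uw luw pp pa hx.
case: (hx u (mem_head _ _)) => a ua; subst u.
case: (@lift_seq _ _ f (rcons p w)) => [x xp|q hq]; first by apply: hx; rewrite inE xp orbT.
case/lastP: q hq => [|q b] hq; first by case: p {pp pa hx} hq.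
rewrite map_rcons in hq; case: (rcons_inj hq) => hp hw; subst p w.
apply: (o a b); first by apply: contraNneq uw => ->.
  by [].
exists q; split; last by rewrite all_map in pa.
rewrite -map_rcons path_map in pp; move: pp.
by rewrite (eq_path (e' := e1)) // => x y; rewrite /relpre he.
Qed.

Lemma FG_iso (V1 V2 : finType) (f : V1 -> V2) (e1 : rel V1) (e2 : rel V2) :
  injective f -> #|V2| <= #|V1| -> (forall x y, e1 x y = e2 (f x) (f y)) ->
  FG e1 =1 FG e2.
Proof.
move=> fi hc he s; have [g fg gf] := inj_card_bij fi hc.
rewrite /FG; set N := size s.
symmetry; apply: (@card_inj _ _ (fun l : {ffun V2 -> 'I_N} => [ffun x => l (f x)])).
- move=> l1 l2 /ffunP h; apply/ffunP => y; have := h (g y); rewrite !ffunE gf.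
  done.
- move=> l /=; congr (_ && _).
    apply: pdec_iff; split.
      move=> o; apply: ordered_ext (ordered_sub fi he o) => x; by rewrite ffunE.
    move=> o u w uw luw [p [pp pa]].
    apply: (ordered_lift (f := f) (e1 := e1) (e2 := e2) (lam := fun v => nat_of_ord (l v)) he _ uw luw pp pa).
      by apply: ordered_ext o => x; rewrite ffunE.
    by move=> x _; exists (g x); rewrite gf.
  apply: eq_forallb => i; congr (_ == _).
  apply: (@card_inj _ _ g) => [|x|y]; first exact: (can_inj gf).
    by rewrite /= ffunE gf.
  by move=> _; exists (f y); rewrite fg.
- move=> l _; exists [ffun y => l (g y)]; apply/ffunP => x; by rewrite !ffunE fg.
Qed.

Lemma bumpE k j : bump k j = if k <= j then j.+1 else j.
Proof. by rewrite /bump; case: (k <= j). Qed.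

Lemma unbumpE k j : unbump k j = if k < j then j.-1 else j.
Proof. by rewrite /unbump; case: (k < j) => /=; rewrite ?subn0 ?subn1. Qed.

Lemma ordered_mono (V : finType) (e : rel V) (g : nat -> nat) lam :
  (forall a b, (g (lam a) < g (lam b)) = (lam a < lam b)) ->
  ordered e lam -> ordered e (fun x => g (lam x)).
Proof.
move=> hg o u w uw luw [p [pp pa]]; apply: (o u w uw).
  have h1 := hg u w; have h2 := hg w u; rewrite luw ltnn in h1 h2.
  by apply/eqP; rewrite eqn_leq leqNgt -h2 leqNgt -h1.
by exists p; split=> //; apply: sub_all pa => x /=; rewrite hg.
Qed.

Lemma bump_lt k j m : j < m -> bump k j < m.+1.
Proof. by move=> h; rewrite bumpE; case: ifP => _; lia. Qed.

Lemma bump_ltE k a b : (bump k a < bump k b) = (a < b).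
Proof. by rewrite !ltnNge leq_bump2. Qed.

Lemma FG_zero (V : finType) (e : rel V) s1 s2 :
  FG e (s1 ++ 0 :: s2) = FG e (s1 ++ s2).
Proof.
rewrite /FG; set t := s1 ++ 0 :: s2; set s := s1 ++ s2.
have hst : size t = (size s).+1 by rewrite /t /s !size_cat addnS.
set k := size s1.
have bo_lt : forall j : 'I_(size s), bump k j < size t.
  by move=> j; rewrite hst bump_lt.
pose bo (j : 'I_(size s)) : 'I_(size t) := Ordinal (bo_lt j).
have boi : injective bo.
  by move=> a b /(congr1 val) /= /(can_inj (bumpK k)) /val_inj.
have nthb : forall j, nth 0 t (bump k j) = nth 0 s j.
  move=> j; rewrite /t /s !nth_cat bumpE -/k.
  case: (leqP k j) => h.
    have h1 : (j.+1 < k) = false by lia.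
    by rewrite h1 (subSn h).
  by rewrite h.
have nthk : nth 0 t k = 0 by rewrite /t nth_cat ltnn subnn.
symmetry; apply: (@card_inj _ _ (fun l : {ffun V -> 'I_(size s)} => [ffun x => bo (l x)])).
- move=> l1 l2 /ffunP h; apply/ffunP => x; have := h x; rewrite !ffunE; exact: boi.
- move=> l /=; congr (_ && _).
    apply: pdec_iff; split => o.
      by apply: ordered_ext (ordered_mono (fun a b => bump_ltE _ _ _) o) => x; rewrite ffunE.
    apply: ordered_ext (ordered_mono (g := unbump k) _ o) => [x|a b].
      by rewrite ffunE /= bumpK.
    by rewrite !ffunE /= !bumpK bump_ltE.
  have cnt_bo : forall j, #|[pred v | [ffun x => bo (l x)] v == bo j]| = #|[pred v | l v == j]|.
    by move=> j; apply: eq_card => v; rewrite !unfold_in /= ffunE (inj_eq boi).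
  have cnt_k : forall i : 'I_(size t), val i = k -> #|[pred v | [ffun x => bo (l x)] v == i]| = 0.
    move=> i hi; apply: eq_card0 => v; rewrite !unfold_in /= ffunE.
    apply/negbTE/eqP => /(congr1 val) /= h.
    by move: (neq_bump k (l v)); rewrite h hi eqxx.
  apply/forallP/forallP => H i.
    case: (eqVneq (val i) k) => hik; first by rewrite cnt_k // hik nthk.
    have hu : unbump k i < size s.
      have : (i : nat) < (size s).+1 by rewrite -hst ltn_ord.
      rewrite unbumpE.
      have : k <= size s by rewrite /k /s size_cat leq_addr.
      move: hik; case: (ltngtP k i) => //; lia.
    have -> : i = bo (Ordinal hu) by apply: val_inj; rewrite /= unbumpKcond; move/negbTE: hik => /= ->.
    by rewrite cnt_bo /= nthb; apply: H.
  by have := H (bo i); rewrite cnt_bo /= nthb.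
- move=> l' /andP [_ /forallP H].
  have nk : forall x, val (l' x) != k.
    move=> x; apply/negP => /eqP hx; have := H (l' x); rewrite hx nthk.
    by move/eqP/card0_eq/(_ x); rewrite !unfold_in /= eqxx.
  have hu : forall x, unbump k (l' x) < size s.
    move=> x; have : (l' x : nat) < (size s).+1 by rewrite -hst ltn_ord.
    rewrite unbumpE.
    have : k <= size s by rewrite /k /s size_cat leq_addr.
    move: (nk x); case: (ltngtP k (l' x)) => //; lia.
  exists [ffun x => Ordinal (hu x)]; apply/ffunP => x; rewrite !ffunE; apply: val_inj.
  by rewrite /= unbumpKcond; move/negbTE: (nk x) => /= ->.
Qed.

Lemma FG_filter (V : finType) (e : rel V) s :
  FG e s = FG e [seq a <- s | a != 0].
Proof.
suff H : forall s1, FG e (s1 ++ s) = FG e (s1 ++ [seq a <- s | a != 0]) by apply: (H [::]).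
elim: s => [|a s IH] s1 //=.
case: (eqVneq a 0) => [->|ha] /=; first by rewrite FG_zero IH.
by rewrite -!cat_rcons IH.
Qed.

Lemma max_uniq (V : finType) (e : rel V) (lam : V -> nat) m u w :
  (forall x y, connect e x y) -> (forall x, lam x <= m) ->
  lam u = m -> lam w = m -> u != w -> ordered e lam -> False.
Proof.
move=> hc hm hu hw uw o.
have /connectP [p pp pl] := hc u w.
case: (shortenP pp) pl => p' pp' up' _ hl.
have unp : u \notin p' by move: up'; rewrite cons_uniq => /andP[].
have wp : w \in p' by have := mem_last u p'; rewrite -hl inE eq_sym (negbTE uw).
pose a := fun x => lam x == m.
have hh : has a p' by apply/hasP; exists w => //; rewrite /a hw.
pose i := find a p'.
have hi : i < size p' by rewrite -has_find.
pose x := nth u p' i.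
have ax : lam x = m by apply/eqP; exact: (nth_find u hh).
have xp : x \in p' := mem_nth u hi.
apply: (o u x); first by apply: contraNneq unp => ->.
  by rewrite hu ax.
exists (take i p'); split.
  have := pp'; rewrite -{1}(cat_take_drop i.+1 p') cat_path (take_nth u hi).
  by case/andP.
have : all (predC a) (take i p') by rewrite all_predC has_take // ltnn.
apply: sub_all => y /=; rewrite /a hu ltn_neqAle hm andbT; done.
Qed.

Definition FGn (V : finType) (e : rel V) N (s : seq nat) :=
  #|[pred l : {ffun V -> 'I_N} | pdec (ordered e (fun v => nat_of_ord (l v)))
      && [forall i : 'I_N, #|[pred v | l v == i]| == nth 0 s i]]|.

Lemma FGnS (V : finType) (e : rel V) N s : size s = N -> FG e s = FGn e N s.
Proof. by move=> <-. Qed.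

Definition dele n (e : rel 'I_n.+1) (v : 'I_n.+1) : rel 'I_n :=
  fun a b => e (lift v a) (lift v b).

Definition extc n N (v : 'I_n.+1) (l' : {ffun 'I_n -> 'I_N}) : {ffun 'I_n.+1 -> 'I_N.+1} :=
  [ffun x => if unlift v x is Some y then widen_ord (leqnSn N) (l' y) else ord_max].

Lemma extc_v n N v (l' : {ffun 'I_n -> 'I_N}) : extc v l' v = ord_max.
Proof. by rewrite ffunE unlift_none. Qed.

Lemma extc_lift n N v (l' : {ffun 'I_n -> 'I_N}) y : extc v l' (lift v y) = widen_ord (leqnSn N) (l' y).
Proof. by rewrite ffunE liftK. Qed.

Lemma lift_or n (v x : 'I_n.+1) : x != v -> exists y, x = lift v y.
Proof. by case: (unliftP v x) => [y ->|->]; [exists y|rewrite eqxx]. Qed.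

Lemma main_del n (e : rel 'I_n.+1) N c :
  size c = N ->
  FGn e N.+1 (rcons c 1) = \sum_v FGn (dele e v) N c.
Proof.
move=> hc.
have nthr : forall i, nth 0 (rcons c 1) i = if i < N then nth 0 c i else (i == N : nat).
  by move=> i; rewrite nth_rcons hc; case: (i < N) => //; case: (i == N).
rewrite /FGn card_sum1.
set A := [pred l : {ffun 'I_n.+1 -> 'I_N.+1} | _].
transitivity (\sum_(l : {ffun 'I_n.+1 -> 'I_N.+1}) \sum_v ((A l) && (l v == ord_max) : nat)).
  apply: eq_bigr => l _; case Al: (A l); last by rewrite big1.
  move: (Al); rewrite /A /= => /andP[_ /forallP /(_ ord_max)].
  rewrite nthr ltnn eqxx card_sum1 => /eqP H.
  by rewrite (eq_bigr (fun v => (l v == ord_max) : nat)) // H.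
rewrite exchange_big /=; apply: eq_bigr => v _.
rewrite -card_sum1; symmetry.
apply: (@card_inj _ _ (@extc n N v)).
- move=> l1 l2 h; apply/ffunP => y; have := congr1 (fun f : {ffun 'I_n.+1 -> 'I_N.+1} => f (lift v y)) h.
  by rewrite !extc_lift => /(congr1 val) /= /val_inj.
- move=> l' /=; rewrite extc_v eqxx andbT /A /=; congr (_ && _).
    pose lamE := fun x => nat_of_ord (extc v l' x).
    have hv : lamE v = N by rewrite /lamE extc_v.
    have hnv : forall x, x != v -> lamE x < N.
      by move=> x /lift_or [y ->]; rewrite /lamE extc_lift /=.
    have hnv' : forall x, lamE x < N -> x != v.
      by move=> x; apply: contraTneq => ->; rewrite hv ltnn.
    apply: pdec_iff; split => o.
      move=> u w uw luw [p [pp pa]].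
      have uv : u != v.
        apply/negP => /eqP huv.
        have wv : w != v by rewrite -huv eq_sym.
        by have := hnv w wv; rewrite /lamE -luw huv extc_v ltnn.
      apply: (ordered_lift (f := lift v) (e1 := dele e v) (e2 := e) (lam := lamE) _ _ uw luw pp pa) => //.
        by apply: ordered_ext o => y; rewrite /lamE extc_lift.
      move=> x hx; apply: lift_or; apply: hnv'.
      move: hx; rewrite inE mem_rcons inE => /orP [/eqP ->|/orP [/eqP ->|xp]].
      - exact: hnv.
      - by rewrite /lamE -luw hnv.
      - by apply: ltn_trans (hnv _ uv); apply: (allP pa).
    apply: ordered_ext (ordered_sub (e1 := dele e v) (@lift_inj _ v) (fun _ _ => erefl) o) => y.
    by rewrite extc_lift.
  have wi : injective (widen_ord (leqnSn N)) by move=> a b /(congr1 val) /= /val_inj.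
  have cnt_w : forall j, #|[pred x | extc v l' x == widen_ord (leqnSn N) j]| = #|[pred y | l' y == j]|.
    move=> j; symmetry; apply: (@card_inj _ _ (lift v)) => [|y|x]; first exact: lift_inj.
      by rewrite /= extc_lift (inj_eq wi).
    rewrite /=; case: (eqVneq x v) => [->|xv _]; last exact: lift_or.
    by rewrite extc_v => /eqP /(congr1 val) /= hN; have := ltn_ord j; rewrite -hN ltnn.
  have cnt_m : #|[pred x | extc v l' x == ord_max]| = 1.
    rewrite -(card1 v); apply: eq_card => x; rewrite !inE.
    case: (eqVneq x v) => [->|xv]; first by rewrite extc_v eqxx.
    case: (lift_or xv) => y ->; rewrite extc_lift.
    by apply/negbTE; rewrite -val_eqE /= neq_ltn ltn_ord.
  apply/forallP/forallP => H i.
    case: (eqVneq i ord_max) => [->|hi]; first by rewrite cnt_m nthr ltnn eqxx.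
    have hi' : i < N by rewrite ltn_neqAle -ltnS ltn_ord andbT; move: hi; rewrite -val_eqE.
    have -> : i = widen_ord (leqnSn N) (Ordinal hi') by apply: val_inj.
    by rewrite cnt_w nthr /= hi'; apply: H.
  by have := H (widen_ord (leqnSn N) i); rewrite cnt_w nthr /= ltn_ord.
- move=> l /andP [/andP [_ /forallP H] /eqP lv].
  have H1 := H ord_max; rewrite nthr ltnn eqxx in H1.
  have hb : forall y, l (lift v y) < N.
    move=> y; rewrite ltn_neqAle -ltnS ltn_ord andbT.
    apply/negP => /eqP hy; move/eqP: H1 => H1.
    have : 1 < #|[pred x | l x == ord_max]|.
      apply/card_gt1P; exists (lift v y), v; rewrite !inE lv eqxx.
      by split; [rewrite -val_eqE /= hy | by [] | rewrite eq_sym neq_lift].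
    by rewrite H1.
  exists [ffun y => Ordinal (hb y)]; apply/ffunP => x.
  case: (unliftP v x) => [y ->|->]; rewrite ?extc_lift ?extc_v //; apply: val_inj.
  by rewrite /= ffunE.
Qed.

Lemma FG_shift n (e : rel 'I_n.+1) :
  (forall x y, connect e x y) ->
  forall s, FG e s = qshift (fun t => \sum_v FG (dele e v) t) s.
Proof.
move=> hc s; rewrite FG_filter /qshift.
have := filter_all (fun a => a != 0) s.
case/lastP: [seq a <- s | a != 0] => [|c a] hnz.
  by rewrite /=; apply: eq_card0 => l; case: (l ord0).
rewrite last_rcons size_rcons /= -cats1 take_size_cat // cats1.
case: (eqVneq a 1) => [->|ha].
  rewrite ?eqxx (FGnS _ (size_rcons c 1)) (main_del _ (erefl (size c))).
  by apply: eq_bigr.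
have a0 : a != 0 by move: hnz; rewrite all_rcons => /andP[].
apply: eq_card0 => l; apply/negP => /andP [/pdecP o /forallP H].
have hi0 : size c < size (rcons c a) by rewrite size_rcons.
have := H (Ordinal hi0); rewrite /= nth_rcons ltnn eqxx => /eqP hca.
have : 1 < #|[pred x | l x == Ordinal hi0]|.
  by rewrite hca ltn_neqAle eq_sym ha lt0n a0.
case/card_gt1P => u [w [hu hw uw]].
apply: (max_uniq (lam := fun x => nat_of_ord (l x)) (m := size c) hc _ _ _ uw o).
- by move=> x; rewrite -ltnS -(size_rcons c a) ltn_ord.
- by move: hu; rewrite inE => /eqP ->.
- by move: hw; rewrite inE => /eqP ->.
Qed.


Arguments pdec : simpl never.

Definition sp (p : seq nat * seq nat) s := [/\ size p.1 = size s, size p.2 = size s &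
  forall i, nth 0 p.1 i + nth 0 p.2 i = nth 0 s i].

Lemma splits_mem s p : p \in splits s <-> sp p s.
Proof.
elim: s p => [|a s IH] [t1 t2].
  rewrite /= inE; split => [/eqP [-> ->]|[]]; first by split => // -[].
  by case: t1 => //; case: t2.
split.
  case/flatten_mapP => i hi /mapP [[q1 q2] hq [-> ->]].
  have [h1 h2 h3] := (IH (q1, q2)).1 hq.
  split => /=; rewrite ?h1 ?h2 //; rewrite /=; case => [|j] /=; last exact: h3.
  by move: hi; rewrite mem_iota => ?; lia.
case=> /=; case: t1 => [|x q1] //; case: t2 => [|y q2] //= [h1] [h2] h3.
change ((x :: q1, y :: q2) \in splits (a :: s)); rewrite [splits _]/splits -/splits.
apply/flatten_mapP; exists x.
  by rewrite mem_iota; have := h3 0 => /= <-; lia.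
apply/mapP; exists (q1, q2).
  by apply/IH; split => // i; exact: (h3 i.+1).
by have := h3 0 => /= <-; congr (_, _ :: _); lia.
Qed.

Lemma splits_uniq s : uniq (splits s).
Proof.
elim: s => [|a s IH] //; rewrite [splits _]/splits -/splits.
apply: (allpairs_uniq (f := fun i (p : seq nat * seq nat) => (i :: p.1, (a - i) :: p.2))) => //; first exact: iota_uniq.
by move=> [i [q1 q2]] [j [r1 r2]] _ _ /= [-> -> _ ->].
Qed.

Definition sumrel (V1 V2 : finType) (e1 : rel V1) (e2 : rel V2) : rel (V1 + V2) :=
  fun x y => match x, y with
             | inl a, inl b => e1 a b
             | inr a, inr b => e2 a b
             | _, _ => false end.

Lemma path_inl (V1 V2 : finType) (e1 : rel V1) (e2 : rel V2) a q :
  path (sumrel e1 e2) (inl a) q -> forall x, x \in q -> exists y, x = inl y.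
Proof.
elim: q a => [|[b|b] q IH] a //= /andP [_ hp] x; rewrite inE => /orP [/eqP ->|xq].
- by exists b.
- exact: IH hp x xq.
Qed.

Lemma path_inr (V1 V2 : finType) (e1 : rel V1) (e2 : rel V2) a q :
  path (sumrel e1 e2) (inr a) q -> forall x, x \in q -> exists y, x = inr y.
Proof.
elim: q a => [|[b|b] q IH] a //= /andP [_ hp] x; rewrite inE => /orP [/eqP ->|xq].
- by exists b.
- exact: IH hp x xq.
Qed.

Definition cs (V : finType) N (l : {ffun V -> 'I_N}) :=
  mkseq (fun i => #|[pred x | nat_of_ord (l x) == i]|) N.

Lemma forall_cs (V : finType) N (l : {ffun V -> 'I_N}) t : size t = N ->
  [forall i : 'I_N, #|[pred x | l x == i]| == nth 0 t i] = (cs l == t).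
Proof.
move=> ht; apply/forallP/eqP => [H|<- i].
  apply: (@eq_from_nth _ 0); first by rewrite size_mkseq ht.
  move=> i; rewrite size_mkseq => hi; rewrite nth_mkseq //.
  have := H (Ordinal hi); move/eqP => <-; apply: eq_card => x.
  by rewrite !unfold_in.
by rewrite nth_mkseq //; apply/eqP; apply: eq_card => x.
Qed.

Lemma sum_count (T : eqType) (r : seq T) q : \sum_(p <- r) ((q == p) : nat) = count_mem q r.
Proof. by elim: r => [|x r IH]; rewrite ?big_nil ?big_cons ?IH //= eq_sym. Qed.

Lemma ordered_sum (V1 V2 : finType) (e1 : rel V1) (e2 : rel V2) (lam : V1 + V2 -> nat) :
  ordered (sumrel e1 e2) lam <->
  ordered e1 (fun a => lam (inl a)) /\ ordered e2 (fun b => lam (inr b)).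
Proof.
split.
  move=> o; split; apply: (ordered_sub _ _ o) => //; by move=> x y [].
move=> [o1 o2] u w uw luw [p [pp pa]].
case: u uw luw pp pa => a uw luw pp pa.
  apply: (ordered_lift (f := inl) (e1 := e1) (lam := lam) _ o1 uw luw pp pa) => // x.
  rewrite inE => /orP [/eqP ->|]; first by exists a.
  exact: path_inl pp x.
apply: (ordered_lift (f := inr) (e1 := e2) (lam := lam) _ o2 uw luw pp pa) => // x.
rewrite inE => /orP [/eqP ->|]; first by exists a.
exact: path_inr pp x.
Qed.

Lemma card_sum_pred (V1 V2 : finType) (P : pred (V1 + V2)) :
  #|P| = #|[pred a | P (inl a)]| + #|[pred b | P (inr b)]|.
Proof. by rewrite !card_sum1 big_sumType. Qed.

Lemma pdec_and (P Q : Prop) : pdec (P /\ Q) = pdec P && pdec Q.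
Proof.
rewrite /pdec; case: excluded_middle_informative => h;
  case: excluded_middle_informative => hp; case: excluded_middle_informative => hq //=;
  exfalso; tauto.
Qed.

Lemma FG_sum (V1 V2 : finType) (e1 : rel V1) (e2 : rel V2) :
  FG (sumrel e1 e2) =1 qmul (FG e1) (FG e2).
Proof.
move=> s; rewrite /qmul; set N := size s.
pose O1 (l1 : {ffun V1 -> 'I_N}) := pdec (ordered e1 (fun v => nat_of_ord (l1 v))).
pose O2 (l2 : {ffun V2 -> 'I_N}) := pdec (ordered e2 (fun v => nat_of_ord (l2 v))).
pose C (l1 : {ffun V1 -> 'I_N}) (l2 : {ffun V2 -> 'I_N}) := [forall i : 'I_N, #|[pred x | l1 x == i]| + #|[pred x | l2 x == i]| == nth 0 s i].
transitivity (\sum_l1 \sum_l2 ((O1 l1 && O2 l2 && C l1 l2) : nat)).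
  rewrite pair_bigA /=.
  have E : \sum_(q : {ffun V1 -> 'I_N} * {ffun V2 -> 'I_N}) ((O1 q.1 && O2 q.2 && C q.1 q.2) : nat)
      = #|[pred q : {ffun V1 -> 'I_N} * {ffun V2 -> 'I_N} | O1 q.1 && O2 q.2 && C q.1 q.2]|.
    by rewrite card_sum1.
  rewrite E /FG -/N; symmetry.
  pose F (q : {ffun V1 -> 'I_N} * {ffun V2 -> 'I_N}) : {ffun V1 + V2 -> 'I_N} :=
    [ffun x => match x with inl a => q.1 a | inr b => q.2 b end].
  apply: (@card_inj _ _ F).
  - move=> [q1 q2] [r1 r2] /ffunP h; congr (_, _); apply/ffunP => x.
      by have := h (inl x); rewrite !ffunE.
    by have := h (inr x); rewrite !ffunE.
  - move=> [q1 q2].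
    have hord : pdec (ordered (sumrel e1 e2) (fun v => nat_of_ord (F (q1,q2) v))) = O1 q1 && O2 q2.
      rewrite /O1 /O2 -pdec_and; apply: pdec_iff; rewrite ordered_sum.
      split; case=> h1 h2; split.
      - by apply: ordered_ext h1 => x; rewrite ffunE.
      - by apply: ordered_ext h2 => x; rewrite ffunE.
      - by apply: ordered_ext h1 => x; rewrite ffunE.
      - by apply: ordered_ext h2 => x; rewrite ffunE.
    have hcnt : [forall i : 'I_N, #|[pred v | F (q1,q2) v == i]| == nth 0 s i] = C q1 q2.
      apply: eq_forallb => i; rewrite card_sum_pred; congr (_ + _ == _); apply: eq_card => x;
        by rewrite !unfold_in /= ffunE.
    rewrite -[LHS]/(O1 q1 && O2 q2 && C q1 q2).
    rewrite -[RHS]/(pdec (ordered (sumrel e1 e2) (fun v => nat_of_ord (F (q1,q2) v))) &&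
       [forall i : 'I_N, #|[pred v | F (q1,q2) v == i]| == nth 0 s i]).
    by rewrite hord hcnt andbA.
  - move=> l _; exists ([ffun a => l (inl a)], [ffun b => l (inr b)]).
    by apply/ffunP => -[a|b]; rewrite !ffunE.
transitivity (\sum_(p <- splits s) FGn e1 N p.1 * FGn e2 N p.2); last first.
  rewrite big_seq_cond [RHS]big_seq_cond; apply: eq_bigr => p /andP[/splits_mem [h1 h2 _] _].
  by rewrite (FGnS _ h1) (FGnS _ h2).
transitivity (\sum_(p <- splits s) \sum_l1 \sum_l2 ((O1 l1 && O2 l2) && ((cs l1, cs l2) == p) : nat)); last first.
  rewrite big_seq_cond [RHS]big_seq_cond; apply: eq_bigr => -[p1 p2] /andP[/splits_mem [h1 h2 _] _].
  rewrite /FGn !card_sum1 big_distrlr /=; apply: eq_bigr => l1 _; apply: eq_bigr => l2 _.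
  rewrite (forall_cs _ h1) (forall_cs _ h2) xpair_eqE /O1 /O2.
  by case: (pdec _); case: (pdec _); case: (cs l1 == p1); case: (cs l2 == p2).
symmetry; rewrite exchange_big; apply: eq_bigr => l1 _; rewrite exchange_big; apply: eq_bigr => l2 _.
rewrite (eq_bigr (fun p => (O1 l1 && O2 l2) * ((cs l1, cs l2) == p))); last first.
  by move=> p _; rewrite mulnb andbA.
rewrite -big_distrr /= sum_count count_uniq_mem ?splits_uniq //.
have -> : ((cs l1, cs l2) \in splits s) = C l1 l2.
  apply/idP/idP.
    move/splits_mem => [_ _ h3]; apply/forallP => i; have := h3 i.
    by rewrite /cs !nth_mkseq // => ->.
  move/forallP => H; apply/splits_mem; split; rewrite /= ?size_mkseq //.
  move=> i; case: (ltnP i N) => hi.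
    by rewrite /cs !nth_mkseq //; apply/eqP; apply: (H (Ordinal hi)).
  by rewrite !nth_default ?size_mkseq.
by rewrite mulnb -andbA.
Qed.


Lemma FG_ext (V : finType) (e1 e2 : rel V) : e1 =2 e2 -> FG e1 =1 FG e2.
Proof. by move=> h; apply: (@FG_iso _ _ id) => //. Qed.

Lemma connK m (x y : 'I_m) : connect (Kg m) x y.
Proof. by case: (eqVneq x y) => [->|h]; [apply: connect0 | apply: connect1]. Qed.

Lemma connL m (x y : 'I_m) : connect (Lg m) x y.
Proof.
suff H : forall k (x y : 'I_m), (y : nat) = x + k -> connect (Lg m) x y /\ connect (Lg m) y x.
  case: (leqP x y) => h.
    have h' : (y : nat) = x + (y - x) by lia.
    by case: (H _ _ _ h').
  have h' : (x : nat) = y + (x - y) by lia.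
  by case: (H _ _ _ h').
elim=> [|k IH] {}x {}y hy.
  have -> : y = x by apply: val_inj; rewrite /= hy addn0.
  by split; apply: connect0.
have hk : x + k < m by have := ltn_ord y; lia.
case: (IH x (Ordinal hk) erefl) => h1 h2; split.
  apply: connect_trans h1 (connect1 _); rewrite /Lg /= hy addnS eqxx //.
apply: connect_trans (connect1 _) h2; rewrite /Lg /= hy addnS eqxx orbT //.
Qed.

Lemma connC m (x y : 'I_m) : connect (Cg m) x y.
Proof.
apply: (connect_sub (e := Lg m)) (connL x y) => a b /orP h; apply: connect1.
rewrite /Cg; case: h => /eqP h; apply/andP; split.
- by apply/eqP => /(congr1 (@nat_of_ord m)); lia.
- by rewrite modn_small ?h ?eqxx //; rewrite h.
- by apply/eqP => /(congr1 (@nat_of_ord m)); lia.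
- by rewrite (modn_small (m := b.+1)) ?h ?eqxx ?orbT // h.
Qed.

Lemma connS m (x y : 'I_m.+1) : connect (Sg m.+1) x y.
Proof.
have H : forall z : 'I_m.+1, connect (Sg m.+1) z ord0 /\ connect (Sg m.+1) ord0 z.
  move=> z; case: (eqVneq z ord0) => [->|h]; first by split; apply: connect0.
  by split; apply: connect1; rewrite /Sg ?h 1?eq_sym ?h //= eqxx ?orbT.
by apply: connect_trans (proj1 (H x)) (proj2 (H y)).
Qed.

Lemma card_pred_const (T : finType) (P : pred T) (t0 : T) :
  (forall t, t = t0) -> #|P| = P t0.
Proof.
move=> h; case hP : (P t0).
  transitivity 1; last by [].
  rewrite -(card1 t0); apply: eq_card => t; rewrite !inE (h t) eqxx.
  by rewrite unfold_in hP.
by apply: eq_card0 => t; rewrite (h t) unfold_in hP.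
Qed.

Lemma cnt0 (P : pred 'I_0) : #|P| = 0.
Proof. by apply: eq_card0 => -[]. Qed.

Lemma FG0 (e : rel 'I_0) : FG e =1 qone.
Proof.
move=> s; rewrite /FG; set N := size s.
pose f0 : {ffun 'I_0 -> 'I_N} := [ffun x : 'I_0 => False_rect 'I_N (Bool.diff_false_true (ltn_ord x))].
rewrite (@card_pred_const _ _ f0); last by move=> t; apply/ffunP => -[].
rewrite /qone; congr (nat_of_bool _).
rewrite -[LHS]/(pdec (ordered e (fun v => nat_of_ord (f0 v))) &&
       [forall i : 'I_N, #|[pred v | f0 v == i]| == nth 0 s i]).
have -> : pdec (ordered e (fun v => nat_of_ord (f0 v))) = true by apply/pdecP => -[].
rewrite /qone /=; apply/forallP/(all_nthP 0) => H i.
  by move=> hi; have := H (Ordinal hi); rewrite cnt0 eq_sym.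
by rewrite cnt0 eq_sym; apply: H.
Qed.

Lemma nth_sumn0 s j : sumn s = 0 -> nth 0 s j = 0.
Proof.
elim: s j => [|a s IH] [|j] //=; first by move=> h; lia.
by move=> h; apply: IH; lia.
Qed.

Lemma sumn_one s i : (forall j, nth 0 s j = (i == j)) -> i < size s -> sumn s = 1.
Proof.
elim: s i => [|a s IH] [|i] //= h hi.
  have ha := h 0; rewrite /= in ha; rewrite ha.
  suff -> : sumn s = 0 by [].
  elim: s {IH hi} h => [|b s IH'] //= h.
  have hb := h 1; rewrite /= in hb; rewrite hb /=; apply: IH' => -[|j] //.
  by have := h j.+2.
have ha := h 0; rewrite /= in ha; rewrite ha (IH i) // => j.
exact: (h j.+1).
Qed.

Lemma sumn_ex s : sumn s = 1 -> exists2 i, i < size s & forall j, nth 0 s j = (i == j).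
Proof.
elim: s => [|a s IH] //= h.
case: a h => [|[|a]] h; rewrite ?add0n ?add1n in h.
- case: (IH h) => i hi hn; exists i.+1 => //; case=> [|j] //=.
- exists 0 => //; case => [|j] //=; apply: nth_sumn0; lia.
- lia.
Qed.

Lemma FG1 (e : rel 'I_1) : FG e =1 M1.
Proof.
move=> s; rewrite /FG /M1; set N := size s.
transitivity #|[pred i : 'I_N | [forall j : 'I_N, ((i == j) : nat) == nth 0 s j]]|.
  symmetry; apply: (@card_inj _ _ (fun i : 'I_N => [ffun _ : 'I_1 => i])).
  - by move=> i j /ffunP /(_ ord0); rewrite !ffunE.
  - move=> i; rewrite -[RHS]/(pdec (ordered e (fun v => nat_of_ord ([ffun _ : 'I_1 => i] v))) &&
       [forall j : 'I_N, #|[pred v | [ffun _ : 'I_1 => i] v == j]| == nth 0 s j]).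
    have -> : pdec (ordered e (fun v => nat_of_ord ([ffun _ : 'I_1 => i] v))) = true.
      by apply/pdecP => u w; rewrite (ord1 u) (ord1 w) eqxx.
    apply: eq_forallb => j; rewrite (@card_pred_const _ _ ord0) ?unfold_in /= ?ffunE //.
    by move=> t; rewrite (ord1 t).
  - move=> l _; exists (l ord0); apply/ffunP => x; by rewrite ffunE (ord1 x).
case: (eqVneq (sumn s) 1) => hs.
  have [i0 hi0 hn] := sumn_ex hs;   transitivity 1; last by [].
  rewrite -(card1 (Ordinal hi0)); apply: eq_card => i; rewrite !inE.
  apply/forallP/eqP => [H|->]; last by move=> j; rewrite hn.
  have := H i; rewrite eqxx hn => /eqP h; apply: val_inj => /=.
  by move: h; case: eqP.
apply: eq_card0 => i; apply/negP => /forallP H.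
move/eqP: hs; apply; apply: (@sumn_one _ i) => // j.
case: (ltnP j N) => hj; first by have := H (Ordinal hj); rewrite /= => /eqP.
rewrite nth_default //; case: eqP => // h.
by have := ltn_ord i; rewrite h ltnNge hj.
Qed.

Lemma qmul_ext F1 F2 G1 G2 : F1 =1 F2 -> G1 =1 G2 -> qmul F1 G1 =1 qmul F2 G2.
Proof. by move=> hF hG s; rewrite /qmul; apply: eq_bigr => p _; rewrite hF hG. Qed.

Definition isol m : rel 'I_m := fun _ _ => false.
Arguments isol m : clear implicits.

Lemma FG_isol m : FG (isol m) =1 qpow M1 m.
Proof.
elim: m => [|m IH]; first exact: FG0.
have -> : qpow M1 m.+1 = qmul M1 (qpow M1 m) by [].
move=> s; rewrite -(qmul_ext (@FG1 (isol 1)) IH) -FG_sum.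
symmetry; apply: (@FG_iso _ _ (@unsplit 1 m)).
- exact: (can_inj unsplitK).
- by rewrite card_sum !card_ord.
- by move=> [x|x] [y|y].
Qed.

Lemma delK m (v : 'I_m.+1) : dele (Kg m.+1) v =2 Kg m.
Proof. by move=> a b; rewrite /dele /Kg (inj_eq (@lift_inj _ v)). Qed.

Lemma partK n : 1 <= n -> FG (Kg n) =1 qscale n (qshift (FG (Kg n.-1))).
Proof.
case: n => // m _ s; rewrite (FG_shift (@connK m.+1)) /qscale /qshift /=.
case: ifP => _; last by rewrite muln0.
rewrite (eq_bigr (fun _ => FG (Kg m) (take (size [seq a <- s | a != 0]).-1 [seq a <- s | a != 0]))).
  by rewrite sum_nat_const card_ord.
by move=> v _; apply: FG_ext (delK v) _.
Qed.

Ltac crunch := rewrite ?bumpE;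
  repeat (first [case: ifP => [?|/negbT ?] | case: eqP => ?]); try done; lia.

Lemma qshift_ext (G H : qs) s : (forall t, G t = H t) -> qshift G s = qshift H s.
Proof. by move=> h; rewrite /qshift h. Qed.

Lemma delL m (v : 'I_m.+1) : FG (dele (Lg m.+1) v) =1 qmul (FG (Lg v)) (FG (Lg (m - v))).
Proof.
move=> s; rewrite -FG_sum; symmetry.
have hv : (v : nat) <= m by rewrite -ltnS ltn_ord.
have f1 : forall a : 'I_v, (a : nat) < m by move=> a; have := ltn_ord a; lia.
have f2 : forall b : 'I_(m - v), v + b < m by move=> b; have := ltn_ord b; lia.
pose f (x : 'I_v + 'I_(m - v)) : 'I_m :=
  match x with inl a => Ordinal (f1 a) | inr b => Ordinal (f2 b) end.
apply: (@FG_iso _ _ f).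
- move=> [a|a] [b|b] /(congr1 (@nat_of_ord m)) /= h; have := ltn_ord a; have := ltn_ord b.
  + by move=> _ _; congr inl; apply: val_inj.
  + lia.
  + lia.
  + by move=> _ _; congr inr; apply: val_inj => /=; lia.
- by rewrite card_sum !card_ord; lia.
- move=> [a|a] [b|b]; rewrite /dele /sumrel /Lg /=; have := ltn_ord a; have := ltn_ord b; crunch.
Qed.

Lemma partL n : 1 <= n -> FG (Lg n) =1
       qshift (fun s => \sum_(1 <= k < n.+1) qmul (FG (Lg k.-1)) (FG (Lg (n - k))) s).
Proof.
case: n => // m _ s; rewrite (FG_shift (@connL m.+1)); apply: qshift_ext => t.
rewrite big_add1 /= big_mkord; apply: eq_bigr => v _.
by rewrite subSS delL.
Qed.

Lemma modS_lt x n : x < n -> x.+1 %% n = if x.+1 == n then 0 else x.+1.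
Proof. by move=> h; case: eqP => [->|hn]; rewrite ?modnn // modn_small //; lia. Qed.

Lemma delC m (v : 'I_m.+1) : 0 < m -> FG (dele (Cg m.+1) v) =1 FG (Lg m).
Proof.
move=> hm s; symmetry.
have hv : (v : nat) <= m by rewrite -ltnS ltn_ord.
have fb : forall a : 'I_m, (if v + a < m then v + a else v + a - m) < m.
  by move=> a; have := ltn_ord a; case: ifP => [?|/negbT ?]; lia.
pose f (a : 'I_m) : 'I_m := Ordinal (fb a).
apply: (@FG_iso _ _ f).
- move=> a b /(congr1 (@nat_of_ord m)) /= h; apply: val_inj => /=.
  move: h; have := ltn_ord a; have := ltn_ord b; crunch.
- by [].
- have g : forall a : 'I_m, (lift v (f a) : nat) = if v + a < m then (v + a).+1 else v + a - m.
    move=> a; rewrite /= bumpE; have := ltn_ord a.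
    by case: (ltnP (v + a) m) => h1 h2; case: ifP => [?|/negbT ?]; lia.
  have g' : forall a : 'I_m, \val (lift v (f a)) = if v + a < m then (v + a).+1 else v + a - m.
    exact: g.
  move=> a b; rewrite /dele /Cg -val_eqE !modS_lt ?ltn_ord // !g !g' /Lg.
  have := ltn_ord a; have := ltn_ord b; crunch.
Qed.

Lemma partC n : 3 <= n -> FG (Cg n) =1 qscale n (qshift (FG (Lg n.-1))).
Proof.
case: n => // m hm s; rewrite (FG_shift (@connC m.+1)) /qscale /qshift /=.
case: ifP => _; last by rewrite muln0.
rewrite (eq_bigr (fun _ => FG (Lg m) (take (size [seq a <- s | a != 0]).-1 [seq a <- s | a != 0]))).
  by rewrite sum_nat_const card_ord.
by move=> v _; apply: delC; lia.
Qed.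

Lemma delS0 m : dele (Sg m.+1) ord0 =2 isol m.
Proof. by move=> a b; rewrite /dele /Sg /isol -val_eqE /= !bumpE /=; crunch. Qed.

Lemma delS m (v : 'I_m.+1) : v != ord0 -> dele (Sg m.+1) v =2 Sg m.
Proof.
move=> hv a b; rewrite /dele /Sg (inj_eq (@lift_inj _ v)) /=.
have : 0 < v by rewrite lt0n; move: hv; rewrite -val_eqE.
crunch.
Qed.

Lemma partS n : 2 <= n ->
  FG (Sg n) =1 qshift (qadd (qscale (n - 1) (FG (Sg (n - 1)))) (qpow M1 (n - 1))).
Proof.
case: n => // m hm s; rewrite subn1 /= (FG_shift (@connS m)); apply: qshift_ext => t.
rewrite big_ord_recl /qadd /qscale (FG_ext (@delS0 m)) FG_isol addnC; congr (_ + _).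
rewrite (eq_bigr (fun _ => FG (Sg m) t)); first by rewrite sum_nat_const card_ord.
by move=> i _; apply: FG_ext; apply: delS; rewrite -val_eqE /= ?bumpE.
Qed.

Theorem mainTheorem16 :
  (forall n : nat, 1 <= n ->
     FG (Kg n) =1 qscale n (qshift (FG (Kg n.-1)))) /\
  (forall n : nat, 1 <= n ->
     FG (Lg n) =1
       qshift (fun s => \sum_(1 <= k < n.+1) qmul (FG (Lg k.-1)) (FG (Lg (n - k))) s)) /\
  (forall n : nat, 3 <= n ->
     FG (Cg n) =1 qscale n (qshift (FG (Lg n.-1)))) /\
  (forall n : nat, 2 <= n ->
     FG (Sg n) =1 qshift (qadd (qscale (n - 1) (FG (Sg (n - 1)))) (qpow M1 (n - 1)))).
Proof.
split; first exact: partK.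
split; first exact: partL.
split; first exact: partC.
exact: partS.
Qed.
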